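(* Let $\mathcal{A}$ be a complex unital Banach algebra and let $x_1,x_2,x_3\in\mathcal{A}$ satisfy $$x_1x_2+x_1x_3+x_2x_3=\alpha_1+\alpha_2(x_1+x_2+x_3)\quad\text{and}\quad x_1x_2x_3=\beta(x_1+x_2+x_3)$$ for some $(\alpha_1,\alpha_2,\beta)\in\mathbb{C}^3\setminus\mathcal{M}$, where $$\mathcal{M}=\{(\alpha_1,\alpha_2,0):\alpha_1,\alpha_2\in\mathbb{C},\ \alpha_1\alpha_2\neq0\}\cup\{(\alpha_1,0,0):\alpha_1\in\mathbb{C}\setminus\{0\}\}.$$ Let $X=\{x_1,x_2,x_3,x_1+x_2+x_3\}$. If any three of the four elements of $X$ are Drazin invertible, then the remaining one is also Drazin invertible.
   Context: $\mathcal{A}$ is a complex unital Banach algebra with unit $1$ (scalars $\lambda$ are identified with $\lambda 1$). An element $a\in\mathcal{A}$ is Drazin invertible if there exists $b\in\mathcal{A}$ (the Drazin inverse, denoted $a^d$) with $ab=ba$, $bab=b$, and $(a(1-ab))^n=0$ for some $n\in\mathbb{N}$; the smallest such $n$ is the Drazin index $i(a)$. $\mathcal{A}^d$ denotes the set of Drazin invertible elements. *)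

(* Defs.v *)
From HB Require Import structures.
From mathcomp Require Import all_boot all_order all_algebra.
From mathcomp Require Import all_classical all_reals.
From mathcomp Require Import complex.

Set Implicit Arguments.
Unset Strict Implicit.
Unset Printing Implicit Defensive.

Import Order.TTheory GRing.Theory Num.Theory.
Local Open Scope ring_scope.

Definition is_banach_algebra_norm (R : realType) (A : algType R[i]%C)
    (nrm : A -> R) : Prop :=
  (forall x : A, 0 <= nrm x) /\
  (forall x : A, nrm x = 0 -> x = 0) /\
  (forall x y : A, nrm (x + y) <= nrm x + nrm y) /\
      (forall (k : R[i]%C) (x : A), (nrm (k *: x))%:C%C = `|k| * (nrm x)%:C%C) /\
      (forall x y : A, nrm (x * y) <= nrm x * nrm y) /\
      nrm 1 = 1 /\
      (forall u : nat -> A,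
         (forall e : R, 0 < e -> exists N : nat, forall m n : nat,
              (N <= m)%N -> (N <= n)%N -> nrm (u m - u n) < e) ->
         exists l : A, forall e : R, 0 < e -> exists N : nat, forall n : nat,
              (N <= n)%N -> nrm (u n - l) < e).

Definition is_drazin_inverse (A : ringType) (a b : A) : Prop :=
  a * b = b * a /\ b * a * b = b /\ exists n : nat, (a * (1 - a * b)) ^+ n = 0.

Definition drazin_invertible (A : ringType) (a : A) : Prop :=
  exists b : A, is_drazin_inverse a b.

(* Main.v *)
Require Import Defs.
From HB Require Import structures.
From mathcomp Require Import all_boot all_order all_algebra.
From mathcomp Require Import all_classical all_reals.
From mathcomp Require Import complex.
From mathcomp Require Import ring.
Import Order.TTheory GRing.Theory Num.Theory.
Local Open Scope ring_scope.

Set Implicit Arguments.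
Unset Strict Implicit.
Unset Printing Implicit Defensive.

Definition cong (T : nzRingType) (K : nat) (P Q : {poly T}) :=
  forall i, (i < K)%N -> P`_i = Q`_i.

Lemma cong_refl (T : nzRingType) K (P : {poly T}) : cong K P P.
Proof. by []. Qed.
Lemma cong_sym (T : nzRingType) K (P Q : {poly T}) : cong K P Q -> cong K Q P.
Proof. by move=> h i hi; rewrite h. Qed.
Lemma cong_trans (T : nzRingType) K (P Q S : {poly T}) :
  cong K P Q -> cong K Q S -> cong K P S.
Proof. by move=> h1 h2 i hi; rewrite h1 // h2. Qed.
Lemma cong_le (T : nzRingType) K K' (P Q : {poly T}) :
  (K' <= K)%N -> cong K P Q -> cong K' P Q.
Proof. by move=> hK h i hi; apply: h; apply: leq_trans hK. Qed.
Lemma congD (T : nzRingType) K (P P' Q Q' : {poly T}) :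
  cong K P P' -> cong K Q Q' -> cong K (P + Q) (P' + Q').
Proof. by move=> h1 h2 i hi; rewrite !coefD h1 // h2. Qed.
Lemma congN (T : nzRingType) K (P P' : {poly T}) :
  cong K P P' -> cong K (- P) (- P').
Proof. by move=> h1 i hi; rewrite !coefN h1. Qed.
Lemma congB (T : nzRingType) K (P P' Q Q' : {poly T}) :
  cong K P P' -> cong K Q Q' -> cong K (P - Q) (P' - Q').
Proof. by move=> h1 h2; apply: congD => //; apply: congN. Qed.
Lemma congMl (T : nzRingType) K (M P P' : {poly T}) :
  cong K P P' -> cong K (M * P) (M * P').
Proof.
move=> h i hi; rewrite !coefM; apply: eq_bigr => j _; rewrite h //.
by apply: leq_ltn_trans hi; apply: leq_subr.
Qed.
Lemma congMr (T : nzRingType) K (M P P' : {poly T}) :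
  cong K P P' -> cong K (P * M) (P' * M).
Proof.
move=> h i hi; rewrite !coefM; apply: eq_bigr => j _; rewrite h //.
by apply: leq_ltn_trans hi; rewrite -ltnS.
Qed.
Lemma congM (T : nzRingType) K (P P' Q Q' : {poly T}) :
  cong K P P' -> cong K Q Q' -> cong K (P * Q) (P' * Q').
Proof.
by move=> h1 h2; apply: cong_trans (congMr _ h1) _; apply: congMl.
Qed.
Lemma congXn0 (T : nzRingType) K (P : {poly T}) : cong K ('X^K * P) 0.
Proof. by move=> i hi; rewrite coefXnM hi coef0. Qed.
Lemma cong_cancel (T : nzRingType) K M (P Q : {poly T}) :
  cong (K + M) (P * 'X^M) (Q * 'X^M) -> cong K P Q.
Proof.
move=> h i hi; have := h (i + M)%N; rewrite !coefMXn ltn_add2r hi.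
rewrite ltnNge leq_addl /= addnK.
move=> H; rewrite H //; by rewrite ltn_add2r.
Qed.
Lemma congX (T : nzRingType) K (P P' : {poly T}) n :
  cong K P P' -> cong K (P ^+ n) (P' ^+ n).
Proof.
move=> h; elim: n => [|n ih]; first by rewrite !expr0.
by rewrite !exprS; apply: congM.
Qed.


Notation sc A := (map_poly (GRing.in_alg A)).

Lemma sc_comm (F : fieldType) (A : algType F) (p : {poly F}) (P : {poly A}) :
  sc A p * P = P * sc A p.
Proof.
apply/polyP => i; rewrite coefM coefMr; apply: eq_bigr => j _.
by rewrite coef_map /= mulr_algl mulr_algr.
Qed.

Lemma sc_cong (F : fieldType) (A : algType F) K (p q : {poly F}) :
  cong K p q -> cong K (sc A p) (sc A q).
Proof. by move=> h i hi; rewrite !coef_map /= h. Qed.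

Lemma inv_mod (F : fieldType) (P : {poly F}) K :
  P`_0 != 0 -> exists W, cong K (P * W) 1.
Proof.
move=> h0; elim: K => [|K [W hW]]; first by exists 0 => i.
pose c := ((1 : {poly F})`_K - (P * W)`_K) / P`_0.
exists (W + c *: 'X^K) => i hi.
rewrite mulrDr -scalerAr coefD coefZ coefMXn.
rewrite ltnS leq_eqVlt in hi; case/orP: hi => [/eqP ->|hi].
  rewrite ltnn subnn /c divfK //; by rewrite addrC subrK.
by rewrite hi mulr0 addr0 hW.
Qed.


Definition PI (T : nzRingType) (P : {poly T}) :=
  exists N, forall K, exists G, cong K (P * G) 'X^N /\ cong K (G * P) 'X^N.

Lemma XnC (T : nzRingType) (P : {poly T}) n : 'X^n * P = P * 'X^n.
Proof. by rewrite commr_polyXn. Qed.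

Lemma PI_mul (T : nzRingType) (P Q : {poly T}) : PI P -> PI Q -> PI (P * Q).
Proof.
move=> [Np hP] [Nq hQ]; exists (Np + Nq)%N => K.
have [GP [hP1 hP2]] := hP K; have [GQ [hQ1 hQ2]] := hQ K.
exists (GQ * GP); split.
  rewrite -mulrA (mulrA Q) exprD.
  apply: cong_trans (congMl _ (congMr _ hQ1)) _.
  by rewrite XnC mulrA; apply: congMr.
rewrite -mulrA (mulrA GP) exprD.
apply: cong_trans (congMl _ (congMr _ hP2)) _.
by rewrite XnC mulrA -XnC; apply: congMl.
Qed.

Lemma PI_cancel_r (T : nzRingType) (P Q : {poly T}) :
  PI (P * Q) -> PI Q -> PI P.
Proof.
move=> [N hF] [M hQ]; exists N => K.
have [GF [hF1 hF2]] := hF (K + M)%N; have [GQ [hQ1 hQ2]] := hQ (K + M)%N.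
exists (Q * GF); split.
  by rewrite mulrA; apply: cong_le hF1; apply: leq_addr.
apply: (@cong_cancel _ _ M); rewrite -exprD.
have e1 : cong (K + M) (GF * P * 'X^M) ('X^N * GQ).
  apply: cong_trans (congMl _ (cong_sym hQ1)) _; rewrite mulrA.
  by apply: congMr; rewrite -mulrA.
have e2 : cong (K + M) (Q * (GF * P * 'X^M)) (Q * ('X^N * GQ)) by apply: congMl.
rewrite !mulrA in e2; apply: cong_trans e2 _.
by rewrite -(XnC Q) -mulrA exprD; apply: congMl.
Qed.

Lemma PI_cancel_l (T : nzRingType) (P Q : {poly T}) :
  PI (P * Q) -> PI P -> PI Q.
Proof.
move=> [N hF] [M hP]; exists N => K.
have [GF [hF1 hF2]] := hF (K + M)%N; have [GP [hP1 hP2]] := hP (K + M)%N.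
exists (GF * P); split; last first.
  by rewrite -mulrA; apply: cong_le hF2; apply: leq_addr.
apply: (@cong_cancel _ _ M); rewrite -exprD.
have e1 : cong (K + M) ('X^M * (Q * GF)) (GP * 'X^N).
  apply: cong_trans (congMr _ (cong_sym hP2)) _; rewrite -mulrA.
  by apply: congMl; rewrite mulrA.
have e2 : cong (K + M) ('X^M * (Q * GF) * P) (GP * 'X^N * P) by apply: congMr.
rewrite -XnC !mulrA in e2; rewrite -XnC !mulrA.
apply: cong_trans e2 _.
by rewrite -mulrA exprD; apply: congMl.
Qed.


Lemma DI_of_c (T : nzRingType) (s c : T) m :
  s * c = c * s -> s ^+ m = s ^+ m.+1 * c -> drazin_invertible s.
Proof.
move=> hc hm.
have hcs : GRing.comm s c by [].
have step k : (m <= k)%N -> s ^+ k.+1 * c = s ^+ k.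
  by move=> hk; rewrite -(subnK hk) -addnS !exprD -mulrA -hm.
have gen k j : (m <= k)%N -> s ^+ (k + j) * c ^+ j = s ^+ k.
  move=> hk; elim: j => [|j ih]; first by rewrite addn0 expr0 mulr1.
  rewrite addnS (exprS c) mulrA step ?ih //; apply: leq_trans hk (leq_addr _ _).
have cX i j : GRing.comm (s ^+ i) (c ^+ j) by apply/commrX/commr_sym/commrX.
pose b := s ^+ m * c ^+ m.+1.
exists b; split; [|split].
- by rewrite /b mulrA -exprS -mulrA -(commrX _ hcs) mulrA -exprSr.
- rewrite /b -!mulrA (mulrA s) -exprS (mulrA (c ^+ _)) -cX -mulrA.
  by rewrite !mulrA -exprD gen.
- exists m.+1.
  have hsb : s * b = s ^+ m * c ^+ m.
    by rewrite /b mulrA -exprS (exprS c) mulrA step.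
  pose e := s ^+ m * c ^+ m.
  have ee : e * e = e.
    rewrite /e -!mulrA (mulrA (c ^+ m)) -cX -!mulrA.
    by rewrite mulrA -exprD mulrA gen.
  have pe k : (1 - e) ^+ k.+1 = 1 - e.
    elim: k => [|k ih]; first by rewrite expr1.
    by rewrite exprS ih mulrBl mul1r mulrBr mulr1 ee subrr subr0.
  rewrite hsb -/e exprMn_comm; last first.
    apply: commrB; first exact: commr1.
    by rewrite /e; apply: commrM; [exact: commrX | apply/commrX].
  rewrite pe mulrBr mulr1 /e mulrA -exprD.
  by rewrite gen // subrr.
Qed.


Lemma zero_low (F : fieldType) (A : algType F) (Phi : {poly F}) (P : {poly A}) k n :
  Phi`_0 = 0 -> (n < k)%N -> (P * sc A (Phi ^+ k))`_n = 0.
Proof.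
move=> h0 hn.
have -> : Phi = drop_poly 1 Phi * 'X.
  have t0 : take_poly 1 Phi = 0.
    apply/polyP => i; rewrite coefE coef0; case: i => [|i] //=.
  by rewrite -{1}(poly_take_drop 1 Phi) t0 add0r expr1.
rewrite exprMn_comm; last by apply: commr_polyX.
by rewrite rmorphM /= map_polyXn mulrA coefMXn hn.
Qed.

Lemma extract (F : fieldType) (A : algType F) (s : A) (Phi : {poly F})
    (H : {poly A}) N :
  Phi`_0 = 0 ->
  cong N.+1 ((s%:P - sc A Phi) * H) 'X^N ->
  cong N.+1 (H * (s%:P - sc A Phi)) 'X^N ->
  s * H`_N = H`_N * s /\ s ^+ N = s ^+ N.+1 * H`_N.
Proof.
move=> h0 h1 h2.
have hc : s * H`_N = H`_N * s.
  have := h1 N (ltnSn N); rewrite -(h2 N (ltnSn N)).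
  rewrite mulrBl mulrBr !coefB sc_comm coefCM coefMC.
  by move/(congr1 (fun t => t + (H * sc A Phi)`_N)); rewrite !subrK.
split => //.
have comm : GRing.comm s%:P (sc A Phi) by rewrite /GRing.comm sc_comm.
have := subrXX_comm N.+1 comm; move/(congr1 (fun t => H * t)).
rewrite mulrA mulrBr => e.
have h3 := h2 N (ltnSn N).
have := congMr (\sum_(i < N.+1) s%:P ^+ (N.+1.-1 - i) * sc A Phi ^+ i) h2 (ltnSn N).
rewrite -e coefB -[sc A Phi ^+ _]rmorphXn zero_low // subr0.
rewrite -[s%:P ^+ _]rmorphXn /= coefMC.
rewrite coefXnM ltnn subnn coef_sum big_ord_recl /= subn0 expr0 mulr1.
rewrite -[s%:P ^+ _]rmorphXn /= coefC /= big1 ?addr0.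
  by move=> <-; apply: commrX; apply: commr_sym.
move=> i _; rewrite -[sc A Phi ^+ _]rmorphXn /=; exact: zero_low.
Qed.

Lemma descent (F : fieldType) (A : algType F) (Q0 R0 : {poly F}) e (s : A) :
  Q0`_0 != 0 -> R0`_0 = 0 ->
  PI (sc A ('X^e * R0) - sc A ('X^e * Q0) * s%:P) -> drazin_invertible s.
Proof.
move=> hQ hR [N hF].
have [G [hG1 hG2]] := hF N.+1.
have [W hW] := inv_mod N.+1 hQ.
pose Phi := R0 * W.
have hPhi : Phi`_0 = 0 by rewrite /Phi coef0M hR mul0r.
pose Z := sc A ('X^e * Q0).
pose D := Z * (sc A Phi - s%:P).
have hD : cong N.+1 D (sc A ('X^e * R0) - sc A ('X^e * Q0) * s%:P).
  rewrite /D /Z mulrBr -rmorphM /=; apply: congB => //.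
  apply: sc_cong; rewrite /Phi -mulrA; apply: congMl.
  rewrite mulrA (mulrC Q0) -mulrA -{2}(mulr1 R0); exact: congMl.
pose H := - (Z * G).
have e1 : (s%:P - sc A Phi) * H = D * G.
  by rewrite /H /D /Z mulrN mulrA -sc_comm -mulNr -mulrN opprB.
have e2 : H * (s%:P - sc A Phi) = G * D.
  rewrite /H /D /Z mulNr -mulrA sc_comm sc_comm -opprB mulrN mulNr opprK.
  by rewrite mulrA.
have c1 : cong N.+1 ((s%:P - sc A Phi) * H) 'X^N.
  by rewrite e1; apply: cong_trans (congMr _ hD) hG1.
have c2 : cong N.+1 (H * (s%:P - sc A Phi)) 'X^N.
  by rewrite e2; apply: cong_trans (congMl _ hD) hG2.
have [hc hp] := extract hPhi c1 c2.
exact: DI_of_c hc hp.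
Qed.


Lemma T_ident (F : fieldType) (A : algType F) (Phi : {poly F}) (a b : A) :
  a * b = b * a -> b * a * b = b -> forall m,
  (a%:P - sc A Phi) * \sum_(k < m.+1) sc A (Phi ^+ k) * (b ^+ k.+1)%:P
  = (a * b)%:P - sc A (Phi ^+ m.+1) * (b ^+ m.+1)%:P.
Proof.
move=> hab hb; elim=> [|m ih].
  by rewrite big_ord1 expr0 rmorph1 mul1r expr1 mulrBl polyCM expr1.
rewrite big_ord_recr /= mulrDr ih mulrBl -addrA; congr (_ + _).
have e : a * b ^+ m.+2 = b ^+ m.+1.
  by rewrite exprS mulrA hab (exprS b) mulrA hb -exprS.
rewrite mulrA -sc_comm -mulrA -polyCM e.
by rewrite addrA addNr add0r mulrA -rmorphM -exprS.
Qed.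

Lemma nil_part (F : fieldType) (A : algType F) (Rp Qp : {poly F}) (a b : A) n :
  a * b = b * a -> b * a * b = b -> (a * (1 - a * b)) ^+ n = 0 ->
  (sc A Rp - sc A Qp * a%:P) *
    (\sum_(i < n) sc A Rp ^+ (n.-1 - i) * (sc A Qp * a%:P) ^+ i)
    * (1 - a * b)%:P = sc A (Rp ^+ n) * (1 - a * b)%:P.
Proof.
move=> hab hb hn.
have cm : GRing.comm (sc A Rp) (sc A Qp * a%:P).
  by apply: commrM; exact: sc_comm.
rewrite -subrXX_comm // mulrBl rmorphXn.
suff -> : (sc A Qp * a%:P) ^+ n * (1 - a * b)%:P = 0 by rewrite subr0.
have cQ : GRing.comm (sc A Qp) a%:P by exact: sc_comm.
rewrite exprMn_comm // -mulrA -[a%:P ^+ _]rmorphXn -polyCM.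
have pe : (1 - a * b) * (1 - a * b) = 1 - a * b.
  by rewrite mulrBl mul1r mulrBr mulr1 -mulrA (mulrA b) hb subrr subr0.
have ap : GRing.comm a (1 - a * b).
  by apply: commrB; [exact: commr1 | apply: commrM].
have : a ^+ n * (1 - a * b) = 0.
  case: n hn => [|n].
    by rewrite !expr0 => e; rewrite mul1r -[1 - _]mul1r e mul0r.
  have pk k : (1 - a * b) ^+ k.+1 = 1 - a * b.
    by elim: k => [|k ih]; rewrite ?expr1 // exprS ih pe.
  by rewrite exprMn_comm // pk.
by move=> ->; rewrite mulr0.
Qed.


Lemma ascent (F : fieldType) (A : algType F) (Q0 R0 R1 : {poly F}) e d (a : A) :
  Q0`_0 != 0 -> R0`_0 = 0 -> R1`_0 != 0 -> 'X^e * R0 = 'X^d * R1 ->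
  drazin_invertible a -> PI (sc A ('X^e * R0) - sc A ('X^e * Q0) * a%:P).
Proof.
move=> hQ hR hR1 eR [b [hab [hb [n hn]]]].
exists (e + d * n)%N => K.
have [W hW] := inv_mod K hQ.
have [V1 hV1] := inv_mod K hR1.
pose Phi := R0 * W.
have hPhi : Phi`_0 = 0 by rewrite /Phi coef0M hR mul0r.
pose Rp := 'X^e * R0; pose Qp := 'X^e * Q0.
pose Fp := sc A Rp - sc A Qp * a%:P.
pose p := 1 - a * b.
pose S1 := \sum_(i < n) sc A Rp ^+ (n.-1 - i) * (sc A Qp * a%:P) ^+ i.
pose T := \sum_(k < K.+1) sc A (Phi ^+ k) * (b ^+ k.+1)%:P.
pose Z := 'X^(d * n) * W.
pose Y := 'X^e * V1 ^+ n.
pose G := - (sc A Z * T) + sc A Y * (S1 * p%:P).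
have cP (c : A) : a * c = c * a -> GRing.comm Fp c%:P.
  move=> hc; apply/commr_sym; rewrite /Fp; apply: commrB.
    by apply/commr_sym; exact: sc_comm.
  apply: commrM; first by apply/commr_sym; exact: sc_comm.
  by rewrite /GRing.comm -!polyCM hc.
have cS (q : {poly F}) : GRing.comm Fp (sc A q) by apply/commr_sym; exact: sc_comm.
have cab : a * b = b * a := hab.
have cG : GRing.comm Fp G.
  apply: commrD; first apply: commrN.
    apply: commrM => //; apply: commr_sum => k _; apply: commrM => //.
    by apply: cP; apply: commrX.
  apply: commrM => //; apply: commrM; last first.
    apply: cP; rewrite /p mulrBr mulrBl mulr1 mul1r; congr (_ - _).
    by rewrite -mulrA -hab.
  apply: commr_sum => i _; apply: commrM; first by apply: commrX.
  by apply: commrX; apply: commrM => //; apply: cP.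
suff h : cong K (Fp * G) 'X^(e + d * n) by exists G; split => //; rewrite -cG.
have eB : Fp * (sc A Y * (S1 * p%:P)) = sc A (Y * Rp ^+ n) * p%:P.
  by rewrite mulrA (cS Y) -mulrA (mulrA Fp) /Fp /S1 /p nil_part // mulrA -rmorphM.
have cB : cong K (sc A (Y * Rp ^+ n) * p%:P) ('X^(e + d * n) * p%:P).
  apply: congMr; rewrite -(map_polyXn (GRing.in_alg A)); apply: sc_cong.
  have -> : Y * Rp ^+ n = 'X^(e + d * n) * (R1 * V1) ^+ n.
    rewrite /Y /Rp eR exprD exprM !exprMn.
    move: ('X^e : {poly F}) (('X^d : {poly F}) ^+ n) (V1 ^+ n) (R1 ^+ n) => x y z w.
    ring.
  rewrite -{2}(mulr1 'X^(e + d * n)); apply: congMl.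
  by rewrite -(expr1n _ n); apply: congX.
have eA : cong K Fp (sc A Qp * (sc A Phi - a%:P)).
  rewrite mulrBr -rmorphM; apply: congB => //; apply: sc_cong.
  rewrite /Rp /Qp /Phi -mulrA; apply: congMl.
  rewrite mulrA (mulrC Q0) -mulrA -{1}(mulr1 R0); apply: congMl.
  exact: cong_sym.
have eA2 : sc A Qp * (sc A Phi - a%:P) * (- (sc A Z * T))
    = sc A (Qp * Z) * ((a%:P - sc A Phi) * T).
  rewrite mulrN -mulNr -mulrN opprB -mulrA [sc A (Qp * Z)]rmorphM -mulrA.
  congr (_ * _); rewrite mulrA -[(a%:P - sc A Phi) * sc A Z]sc_comm.
  by rewrite mulrA.
have cT := T_ident Phi hab hb K.
have cA : cong K (sc A (Qp * Z) * ((a * b)%:P - sc A (Phi ^+ K.+1) * (b ^+ K.+1)%:P))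
    ('X^(e + d * n) * (a * b)%:P).
  apply: congM.
    rewrite -(map_polyXn (GRing.in_alg A)); apply: sc_cong.
    have -> : Qp * Z = 'X^(e + d * n) * (Q0 * W).
      rewrite /Qp /Z exprD.
      move: ('X^e : {poly F}) ('X^(d * n) : {poly F}) => x y; ring.
    by rewrite -{2}(mulr1 'X^(e + d * n)); apply: congMl.
  rewrite -{2}(subr0 (a * b)%:P); apply: congB => // i hi.
  by rewrite sc_comm zero_low ?coef0 // ltnS ltnW.
have : cong K (Fp * G) ('X^(e + d * n) * (a * b)%:P + 'X^(e + d * n) * p%:P).
  rewrite /G mulrDr; apply: congD.
    apply: cong_trans (congMr _ eA) _.
    by rewrite eA2 cT.
  by rewrite eB.
by rewrite -mulrDr -polyCD /p addrC subrK polyC1 mulr1.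
Qed.


Lemma zmod_rearr (V : zmodType) (u1 u2 u3 u4 u5 : V) :
  u1 - u2 + u3 + u4 - u5 = u1 + u3 - (u2 - u4 + u5).
Proof.
rewrite !opprD !opprK !addrA; congr (_ - _).
rewrite -!addrA; congr (_ + _); rewrite addrC -addrA; congr (_ + _).
by rewrite addrC.
Qed.

Lemma zmod_rearr2 (V : zmodType) (u v w z : V) :
  u - w - (v - z) = u - v - w + z.
Proof. by rewrite opprB !addrA (addrAC u (- v)) (addrAC (u - w) (- v)). Qed.

Lemma factor3 (F : fieldType) (A : algType F) (x1 x2 x3 : A) (al1 al2 be : F) :
  x1 * x2 + x1 * x3 + x2 * x3 = al1%:A + al2 *: (x1 + x2 + x3) ->
  x1 * x2 * x3 = be *: (x1 + x2 + x3) ->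
  ('X - x1%:P) * ('X - x2%:P) * ('X - x3%:P) =
  sc A ('X^3 + al1%:P * 'X) - sc A ('X^2 - al2%:P * 'X + be%:P) * (x1 + x2 + x3)%:P.
Proof.
move=> h1 h2.
set X : {poly A} := 'X.
have cX (P : {poly A}) : P * X = X * P by rewrite /X commr_polyX.
have e12 : (X - x1%:P) * (X - x2%:P) = X * (X - x1%:P - x2%:P) + (x1 * x2)%:P.
  by rewrite mulrBl !mulrBr (cX x1%:P) -polyCM zmod_rearr2.
have e3 (b : {poly A}) : (X - b) * (X - x3%:P) = X * (X - x3%:P - b) + b * x3%:P.
  by rewrite mulrBl !mulrBr (cX b) zmod_rearr2 (addrAC (X * X) (- (X * b))).
have hb : X - x1%:P - x2%:P = X - (x1 + x2)%:P by rewrite polyCD opprD addrA.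
have hs : X - x3%:P - (x1 + x2)%:P = X - (x1 + x2 + x3)%:P.
  by rewrite [(x1 + x2 + x3)%:P]polyCD opprD addrA addrAC.
rewrite e12 mulrDl -mulrA hb e3 hs mulrDr mulrA mulrBr (mulrBr (x1 * x2)%:P).
rewrite (cX (x1 * x2)%:P) -!polyCM.
have he2 : (x1 + x2) * x3 + x1 * x2 = x1 * x2 + x1 * x3 + x2 * x3.
  by rewrite mulrDl addrC addrA.
set s := x1 + x2 + x3.
rewrite h2 addrA -(addrA (_ - _)) -mulrDr -polyCD he2 h1.
rewrite -[al2 *: _]mulr_algl -[be *: _]mulr_algl [(_%:A + _)%:P]polyCD !polyCM.
set S := s%:P.
rewrite !rmorphD !rmorphN !rmorphM /= map_polyX !map_polyC /= -/X mulrDr.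
rewrite mulrDl mulrBl (cX (al1%:A)%:P) (cX (al2%:A)%:P) !mulrA.
by rewrite addrA zmod_rearr.
Qed.


Lemma params (F : fieldType) (al1 al2 be : F) :
  ~ ((be = 0 /\ al1 * al2 != 0) \/ (al2 = 0 /\ be = 0 /\ al1 != 0)) ->
  exists e (Q0 R0 : {poly F}) d (R1 : {poly F}),
    [/\ 'X^3 + al1%:P * 'X = 'X^e * R0, 'X^2 - al2%:P * 'X + be%:P = 'X^e * Q0,
     Q0`_0 != 0, R0`_0 = 0 & R1`_0 != 0 /\ 'X^e * R0 = 'X^d * R1].
Proof.
move=> hM.
have hX3 : 'X^3 = 'X * 'X * 'X :> {poly F} by rewrite !exprSr expr0 mul1r.
have hX2 : 'X^2 = 'X * 'X :> {poly F} by rewrite expr2.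
have c0 : ('X^3 + al1%:P * 'X : {poly F})`_0 = 0.
  by rewrite coefD coefXn coefCM coefX mulr0 addr0.
case: (eqVneq be 0) => hbe.
  have ha1 : al1 = 0.
    case: (eqVneq al1 0) => // ha1; exfalso; apply: hM.
    case: (eqVneq al2 0) => ha2; first by right.
    by left; split => //; rewrite mulf_neq0.
  rewrite ha1 hbe polyC0 mul0r addr0 addr0.
  case: (eqVneq al2 0) => ha2.
    exists 2%N, 1, 'X, 3%N, 1; split.
    - by rewrite hX3 hX2 ?mulrA.
    - by rewrite ha2 polyC0 mul0r subr0 mulr1.
    - by rewrite coefC oner_neq0.
    - by rewrite coefX.
    - by split; [rewrite coefC oner_neq0 | rewrite hX3 hX2 mulr1].
  exists 1%N, ('X - al2%:P), ('X^2), 3%N, 1; split.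
  - by rewrite hX3 hX2 expr1 ?mulrA.
  - by rewrite hX2 expr1 mulrBr (mulrC al2%:P).
  - by rewrite coefB coefX coefC subr_eq0 eq_sym.
  - by rewrite coefXn.
  - by split; [rewrite coefC oner_neq0 | rewrite hX3 hX2 mulr1 expr1 mulrA].
have cQ : ('X^2 - al2%:P * 'X + be%:P : {poly F})`_0 != 0.
  by rewrite coefD coefB coefXn coefCM coefX coefC mulr0 subr0 add0r.
case: (eqVneq al1 0) => ha1.
  exists 0%N, ('X^2 - al2%:P * 'X + be%:P), ('X^3 + al1%:P * 'X), 3%N, 1.
  rewrite !expr0 !mul1r; split => //; split; first by rewrite coefC oner_neq0.
  by rewrite ha1 polyC0 mul0r addr0 mulr1.
exists 0%N, ('X^2 - al2%:P * 'X + be%:P), ('X^3 + al1%:P * 'X), 1%N, ('X^2 + al1%:P).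
rewrite !expr0 !mul1r; split => //; split; first by rewrite coefD coefXn coefC add0r.
by rewrite expr1 mulrDr hX3 hX2 (mulrC 'X (al1%:P)) ?mulrA.
Qed.
Lemma DIX (F : fieldType) (A : algType F) (x : A) :
  drazin_invertible x <-> PI ('X - x%:P).
Proof.
have e : sc A ('X^0 * 'X) - sc A ('X^0 * 1) * x%:P = 'X - x%:P.
  by rewrite !expr0 !mul1r rmorph1 map_polyX mul1r.
split => h.
  rewrite -e; apply: (@ascent _ _ 1 'X 1 0 1) => //.
  - by rewrite coefC oner_neq0.
  - by rewrite coefX.
  - by rewrite coefC oner_neq0.
  - by rewrite expr0 expr1 mul1r mulr1.
apply: (@descent _ _ 1 'X 0); rewrite ?e //.
- by rewrite coefC oner_neq0.
- by rewrite coefX.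
Qed.

Unset Implicit Arguments.
Set Strict Implicit.

Theorem theorem2p1 (R : realType) (A : algType R[i]%C) (nrm : A -> R)
    (hA : is_banach_algebra_norm nrm)
    (x1 x2 x3 : A) (alpha1 alpha2 beta : R[i]%C)
    (hM : ~ ((beta = 0 /\ alpha1 * alpha2 != 0) \/
             (alpha2 = 0 /\ beta = 0 /\ alpha1 != 0)))
    (h1 : x1 * x2 + x1 * x3 + x2 * x3 = alpha1%:A + alpha2 *: (x1 + x2 + x3))
    (h2 : x1 * x2 * x3 = beta *: (x1 + x2 + x3)) :
  [/\ (drazin_invertible x2 -> drazin_invertible x3 ->
         drazin_invertible (x1 + x2 + x3) -> drazin_invertible x1),
      (drazin_invertible x1 -> drazin_invertible x3 ->
         drazin_invertible (x1 + x2 + x3) -> drazin_invertible x2),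
      (drazin_invertible x1 -> drazin_invertible x2 ->
         drazin_invertible (x1 + x2 + x3) -> drazin_invertible x3) &
      (drazin_invertible x1 -> drazin_invertible x2 ->
         drazin_invertible x3 -> drazin_invertible (x1 + x2 + x3))].
Proof.
have hF := factor3 h1 h2.
have [e [Q0 [R0 [d [R1 [eR eQ hQ hR [hR1 eRd]]]]]]] := params hM.
rewrite eR eQ in hF.
have Ds : drazin_invertible (x1 + x2 + x3) <->
    PI (('X - x1%:P) * ('X - x2%:P) * ('X - x3%:P)).
  rewrite hF; split => h; first exact: ascent hQ hR hR1 eRd h.
  exact: descent hQ hR h.
split.
- move=> /DIX d2 /DIX d3 /Ds dF; apply/DIX.
  apply: PI_cancel_r (PI_mul d2 d3); by rewrite mulrA.
- move=> /DIX d1 /DIX d3 /Ds dF; apply/DIX.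
  apply: PI_cancel_r d3; apply: PI_cancel_l d1; by rewrite mulrA.
- move=> /DIX d1 /DIX d2 /Ds dF; apply/DIX.
  exact: PI_cancel_l dF (PI_mul d1 d2).
- move=> /DIX d1 /DIX d2 /DIX d3; apply/Ds.
  exact: PI_mul (PI_mul d1 d2) d3.
Qed.
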